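(* Let $d\ge 2$ and let $V,W\in SU(d)$. The following are equivalent: (i) there exists a non-trivial tester $\mathcal{T}=(|\psi\rangle,\{|\chi_i\rangle\langle\chi_i|\}_{i=1}^d)$ such that $$H(\mathcal{T}|V)+H(\mathcal{T}|W)=0;$$ (ii) $V$ and $W$ are perfectly distinguishable, i.e. there exists a unit vector $|\phi\rangle\in\mathbb{C}^d$ with $\langle\phi|V^\dagger W|\phi\rangle=0$.
   Context: A tester is a pair $\mathcal{T}=(|\psi\rangle,\{|\chi_i\rangle\langle\chi_i|\}_{i=1}^d)$ consisting of a unit vector $|\psi\rangle\in\mathbb{C}^d$ (the input) and an orthonormal basis $\{|\chi_i\rangle\}_{i=1}^d$ of $\mathbb{C}^d$ (a projective measurement). For a unitary $U$, the entropy of testing $U$ with $\mathcal{T}$ is the Shannon entropy of the outcome distribution: $$H(\mathcal{T}|U)=-\sum_{i=1}^d|\langle\chi_i|U|\psi\rangle|^2\log|\langle\chi_i|U|\psi\rangle|^2,$$ with the convention $0\log 0=0$. For the pair $V,W$, a tester is called trivial if the two evolved inputs $V|\psi\rangle$ and $W|\psi\rangle$ are equal up to a global phase. In particular, this covers the situation where the input is sent by $V$ to a basis vector $|\chi_i\rangle$ that is an eigenvector of $WV^\dagger$. A tester is non-trivial otherwise. *)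

(* Defs.v *)
From mathcomp Require Import all_boot all_algebra.
From mathcomp Require Import complex.
From mathcomp Require Import reals exp.
Import GRing.Theory Num.Theory.

Set Implicit Arguments.
Unset Strict Implicit.
Unset Printing Implicit Defensive.

Local Open Scope ring_scope.
Local Open Scope complex_scope.

Section QDefs.
Variable R : realType.
Local Notation C := R[i].
Variable d : nat.

Definition adjmx m n (A : 'M[C]_(m, n)) : 'M[C]_(n, m) := (map_mx Num.conj A)^T.

Definition dotc (u v : 'cV[C]_d) : C := \sum_(k < d) (u k 0)^* * v k 0.

Definition sqmod (z : C) : R := (complex.Re z) ^+ 2 + (complex.Im z) ^+ 2.

Definition unit_vec (v : 'cV[C]_d) : Prop := dotc v v = 1.

Definition orthonormal_basis (chi : 'I_d -> 'cV[C]_d) : Prop :=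
  forall i j, dotc (chi i) (chi j) = (i == j)%:R.

Definition SU (U : 'M[C]_d) : Prop := U *m adjmx U = 1%:M /\ \det U = 1.

Definition tester (psi : 'cV[C]_d) (chi : 'I_d -> 'cV[C]_d) : Prop :=
  unit_vec psi /\ orthonormal_basis chi.

Definition outcome_prob (psi : 'cV[C]_d) (chi : 'I_d -> 'cV[C]_d)
  (U : 'M[C]_d) (i : 'I_d) : R := sqmod (dotc (chi i) (U *m psi)).

(* - p log p with the convention 0 log 0 = 0 *)
Definition entf (p : R) : R := if p == 0 then 0 else - (p * ln p).

Definition test_entropy (psi : 'cV[C]_d) (chi : 'I_d -> 'cV[C]_d)
  (U : 'M[C]_d) : R := \sum_(i < d) entf (outcome_prob psi chi U i).

(* trivial tester for the pair V, W: V psi and W psi agree up to a global phase *)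
Definition trivial_tester (V W : 'M[C]_d) (psi : 'cV[C]_d) : Prop :=
  exists c : C, sqmod c = 1 /\ W *m psi = c *: (V *m psi).

End QDefs.

(* Main.v *)
Require Import Defs.
From mathcomp Require Import all_boot all_algebra.
From mathcomp Require Import complex.
From mathcomp Require Import reals exp.
From mathcomp Require Import sesquilinear spectral.
From mathcomp Require Import ring lra.
Import GRing.Theory Num.Theory order.Order.TTheory.
Set Implicit Arguments.
Unset Strict Implicit.
Local Open Scope ring_scope.
Local Open Scope complex_scope.

Section Aux.
Variable R : realType.
Local Notation C := R[i].

Lemma sqmodE (z : C) : (sqmod z)%:C = z * conjc z.
Proof.
case: z => a b; rewrite /sqmod /=.
apply/eqP; rewrite eq_complex /=; apply/andP; split; apply/eqP; ring.
Qed.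

Lemma sqmod_ge0 (z : C) : 0 <= sqmod z.
Proof. rewrite /sqmod; apply: addr_ge0; exact: sqr_ge0. Qed.

Lemma sqmod_eq0 (z : C) : sqmod z = 0 -> z = 0.
Proof.
case: z => a b; rewrite /sqmod /= => h.
have := sqr_ge0 a; have := sqr_ge0 b => h1 h2.
have ha : a ^+ 2 = 0 by lra.
have hb : b ^+ 2 = 0 by move: h; rewrite ha add0r.
by move/eqP: ha; rewrite sqrf_eq0 => /eqP ->; move/eqP: hb; rewrite sqrf_eq0 => /eqP ->.
Qed.

Lemma sqmodM (x y : C) : sqmod (x * y) = sqmod x * sqmod y.
Proof.
apply: (@complexI R); rewrite rmorphM /= !sqmodE rmorphM /=; ring.
Qed.

Lemma adjmxE m n (A : 'M[C]_(m,n)) : adjmx A = (A ^t Num.conj)%sesqui.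
Proof. by apply/matrixP => i j; rewrite !mxE. Qed.


Variable d : nat.
Implicit Types u v : 'cV[C]_d.

Lemma dotcE u v : dotc u v = (adjmx u *m v) 0 0.
Proof. by rewrite /dotc !mxE; apply: eq_bigr => k _; rewrite !mxE. Qed.

Lemma adjmxM m n p (A : 'M[C]_(m,n)) (B : 'M[C]_(n,p)) :
  adjmx (A *m B) = adjmx B *m adjmx A.
Proof. by rewrite /adjmx map_mxM trmx_mul. Qed.

Lemma adjmxK m n (A : 'M[C]_(m,n)) : adjmx (adjmx A) = A.
Proof. by apply/matrixP => i j; rewrite !mxE conjCK. Qed.

Lemma dotc_adj (A : 'M[C]_d) u v : dotc u (A *m v) = dotc (adjmx A *m u) v.
Proof. by rewrite !dotcE adjmxM adjmxK mulmxA. Qed.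

Lemma dotcZr u v c : dotc u (c *: v) = c * dotc u v.
Proof.
rewrite /dotc mulr_sumr; apply: eq_bigr => k _; rewrite !mxE; ring.
Qed.

Lemma dotcZl u v c : dotc (c *: u) v = conjc c * dotc u v.
Proof.
rewrite /dotc mulr_sumr; apply: eq_bigr => k _; rewrite !mxE rmorphM /=; ring.
Qed.

Lemma dotcC u v : dotc v u = conjc (dotc u v).
Proof.
rewrite /dotc rmorph_sum; apply: eq_bigr => k _; rewrite rmorphM /= conjcK; ring.
Qed.

Lemma unitary_l (U : 'M[C]_d) : U *m adjmx U = 1%:M -> adjmx U *m U = 1%:M.
Proof. exact: mulmx1C. Qed.

Lemma dotc_unitary (U : 'M[C]_d) u v : U *m adjmx U = 1%:M ->
  dotc (U *m u) (U *m v) = dotc u v.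
Proof. by move=> /unitary_l h; rewrite dotc_adj mulmxA h mul1mx. Qed.

Definition bmx (chi : 'I_d -> 'cV[C]_d) : 'M[C]_d := \matrix_(k, i) chi i k 0.

Lemma expand (chi : 'I_d -> 'cV[C]_d) : orthonormal_basis chi ->
  forall v k, v k 0 = \sum_i dotc (chi i) v * chi i k 0.
Proof.
move=> ho v k.
have h1 : adjmx (bmx chi) *m bmx chi = 1%:M.
  apply/matrixP => i j; rewrite !mxE -ho /dotc; apply: eq_bigr => l _; rewrite !mxE.
  by [].
have h2 := mulmx1C h1.
have e : v = bmx chi *m (adjmx (bmx chi) *m v) by rewrite mulmxA h2 mul1mx.
rewrite {1}e !mxE; apply: eq_bigr => i _; rewrite !mxE mulrC; congr (_ * _).
rewrite !dotcE !mxE; apply: eq_bigr => l _; rewrite !mxE.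
by [].
Qed.

Lemma parseval (chi : 'I_d -> 'cV[C]_d) : orthonormal_basis chi ->
  forall v, dotc v v = \sum_i (sqmod (dotc (chi i) v))%:C.
Proof.
move=> ho v.
transitivity (\sum_k (v k 0)^* * v k 0); first by [].
under eq_bigr => k _ do rewrite [X in _ * X](@expand chi ho v k) mulr_sumr.
rewrite exchange_big /=; apply: eq_bigr => i _.
rewrite sqmodE -dotcC /dotc mulr_sumr; apply: eq_bigr => k _; ring.
Qed.

Lemma entf_ge0 (p : R) : 0 <= p -> p <= 1 -> 0 <= entf p.
Proof.
move=> h0 h1; rewrite /entf; case: ifP => // _.
rewrite oppr_ge0; apply: mulr_ge0_le0 => //; exact: ln_le0.
Qed.

Lemma entf_eq0 (p : R) : 0 <= p -> entf p = 0 -> p = 0 \/ p = 1.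
Proof.
move=> h0; rewrite /entf; case: eqP => [->|/eqP pn0]; first by left.
move/eqP; rewrite oppr_eq0 mulf_eq0 (negbTE pn0) /= ln_eq0; last first.
  by rewrite lt_def pn0.
by move/eqP; right.
Qed.

Lemma entf0 : entf (0 : R) = 0.
Proof. by rewrite /entf eqxx. Qed.

Lemma entf1 : entf (1 : R) = 0.
Proof. by rewrite /entf ln1 mulr0 oppr0; case: ifP. Qed.

Lemma adjmx_col m1 m2 n (X : 'M[C]_(m1, n)) (Y : 'M[C]_(m2, n)) :
  adjmx (col_mx X Y) = row_mx (adjmx X) (adjmx Y).
Proof. by rewrite /adjmx map_col_mx tr_col_mx. Qed.

Lemma adj_dot (a b : 'cV[C]_d) : adjmx a *m b = (dotc a b)%:M.
Proof. by rewrite dotcE -mx11_scalar. Qed.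

Lemma extend2 (u w : 'cV[C]_d) : (2 <= d)%N ->
  dotc u u = 1 -> dotc w w = 1 -> dotc u w = 0 ->
  exists chi : 'I_d -> 'cV[C]_d, orthonormal_basis chi /\
    exists i0 i1, i0 != i1 /\ chi i0 = u /\ chi i1 = w.
Proof.
move=> hd huu hww huw.
pose A : 'M[C]_(1 + 1, d) := col_mx (adjmx u) (adjmx w).
have hA : A *m adjmx A = 1%:M.
  rewrite /A adjmx_col mul_col_row !adjmxK !adj_dot huu hww huw.
  rewrite dotcC huw conjc0 [RHS]scalar_mx_block; congr block_mx; apply/matrixP=> i j; rewrite !mxE; by case: eqP.
pose K := kermx (adjmx A).
pose S := schmidt (row_base K).
have hS : S *m adjmx S = 1%:M.
  have /unitarymxP := @schmidt_unitarymx _ _ _ (row_base K) (rank_leq_col _).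
  by rewrite adjmxE.
have hSA : S *m adjmx A = 0.
  apply/sub_kermxP; rewrite -/K.
  by rewrite /S (eqmx_schmidt_free (row_base_free K)) eq_row_base submx_refl.
have hAS : A *m adjmx S = 0.
  by rewrite -[A]adjmxK -adjmxM hSA; apply/matrixP => i j; rewrite !mxE; exact: conjc0.
pose M := col_mx A S.
have hM : M *m adjmx M = 1%:M.
  rewrite /M adjmx_col mul_col_row hA hS hSA hAS [RHS]scalar_mx_block.
  by congr block_mx; apply/matrixP=> i j; rewrite !mxE.
have e : (1 + 1 + \rank K)%N = d.
  have hAu : A \is unitarymx by apply/unitarymxP; rewrite -adjmxE.
  by rewrite mxrank_ker mxrank_tr mxrank_map (mxrank_unitary hAu) subnKC.
pose chi (i : 'I_d) := adjmx (row (cast_ord (esym e) i) M).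
exists chi; split.
  move=> i j; rewrite /chi /dotc.
  have /matrixP/(_ (cast_ord (esym e) i) (cast_ord (esym e) j)) := hM.
  rewrite !mxE (inj_eq (@cast_ord_inj _ _ _)) => <-.
  by apply: eq_bigr => k _; rewrite !mxE conjCK.
exists (cast_ord e (lshift _ (lshift 1 ord0))), (cast_ord e (lshift _ (rshift 1 ord0))).
split; first by rewrite (inj_eq (@cast_ord_inj _ _ _)) -val_eqE.
rewrite /chi !cast_ordK /M rowKu rowKu /A rowKu rowKd.
by rewrite !row_id !adjmxK.
Qed.


Lemma sqmodJ (z : C) : sqmod (conjc z) = sqmod z.
Proof. by case: z => a b; rewrite /sqmod /= sqrrN. Qed.

Lemma sqmod0 : sqmod (0 : C) = 0.
Proof. by rewrite /sqmod /= expr0n /= addr0. Qed.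

Lemma sqmod1 : sqmod (1 : C) = 1.
Proof. by rewrite /sqmod /= expr0n /= addr0 expr1n. Qed.

Lemma sum_prob (chi : 'I_d -> 'cV[C]_d) v : orthonormal_basis chi ->
  dotc v v = 1 -> \sum_i sqmod (dotc (chi i) v) = 1.
Proof.
move=> ho hv; apply: (@complexI R); rewrite rmorph_sum /= -(parseval ho) hv.
by [].
Qed.

Lemma prob_le1 (chi : 'I_d -> 'cV[C]_d) v i : orthonormal_basis chi ->
  dotc v v = 1 -> sqmod (dotc (chi i) v) <= 1.
Proof.
move=> ho hv; rewrite -(sum_prob ho hv) (bigD1 i) //= lerDl.
by apply: sumr_ge0 => k _; apply: sqmod_ge0.
Qed.

Lemma ent_ge0 (chi : 'I_d -> 'cV[C]_d) v : orthonormal_basis chi ->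
  dotc v v = 1 -> 0 <= \sum_i entf (sqmod (dotc (chi i) v)).
Proof.
move=> ho hv; apply: sumr_ge0 => i _; apply: entf_ge0; first exact: sqmod_ge0.
exact: prob_le1.
Qed.

Lemma det_dist (chi : 'I_d -> 'cV[C]_d) v : orthonormal_basis chi ->
  dotc v v = 1 -> \sum_i entf (sqmod (dotc (chi i) v)) = 0 ->
  exists i c, sqmod c = 1 /\ v = c *: chi i.
Proof.
move=> ho hv hs.
pose p i := sqmod (dotc (chi i) v).
have hp0 i : 0 <= p i by apply: sqmod_ge0.
have hsum : \sum_i p i = 1 by apply: sum_prob.
have he := psumr_eq0P (fun i _ => entf_ge0 (hp0 i) (prob_le1 i ho hv)) hs.
have h01 i : p i = 0 \/ p i = 1 by apply: entf_eq0 => //; apply: he.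
have [i hi] : exists i, p i = 1.
  case: (pickP (fun i => p i == 1)) => [i /eqP hi|hn]; first by exists i.
  move: hsum; rewrite big1; first by move/eqP; rewrite eq_sym oner_eq0.
  move=> i _; case: (h01 i) => // hi; by move: (hn i); rewrite hi eqxx.
have hz k : k != i -> dotc (chi k) v = 0.
  move=> hk; apply: sqmod_eq0.
  have : \sum_(k | k != i) p k = 0.
    by move: hsum; rewrite (bigD1 i) //= hi => /(canRL (addKr 1)) ->; rewrite addNr.
  by move/psumr_eq0P => /(_ (fun k _ => hp0 k)) /(_ k hk).
exists i, (dotc (chi i) v); split; first exact: hi.
apply/matrixP => k j; rewrite ord1 !mxE (expand ho v k) (bigD1 i) //= big1 ?addr0 //.
by move=> l hl; rewrite hz // mul0r.
Qed.
End Aux.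

Unset Implicit Arguments.

Theorem proposition1 (R : realType) (d : nat) (hd : (2 <= d)%N)
  (V W : 'M[R[i]]_d) (hV : SU V) (hW : SU W) :
  (exists (psi : 'cV[R[i]]_d) (chi : 'I_d -> 'cV[R[i]]_d),
      tester psi chi /\ ~ trivial_tester V W psi /\
      test_entropy psi chi V + test_entropy psi chi W = 0)
  <->
  (exists phi : 'cV[R[i]]_d,
      unit_vec phi /\ dotc phi ((adjmx V *m W) *m phi) = 0).
Proof.
case: hV => hV _; case: hW => hW _.
have key phi : dotc phi ((adjmx V *m W) *m phi) = dotc (V *m phi) (W *m phi).
  by rewrite -mulmxA dotc_adj adjmxK.
split.
- move=> [psi [chi [[hpsi ho] [hnt hent]]]].
  exists psi; split => //; rewrite key.
  have hv : dotc (V *m psi) (V *m psi) = 1 by rewrite dotc_unitary.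
  have hw : dotc (W *m psi) (W *m psi) = 1 by rewrite dotc_unitary.
  have h1 := ent_ge0 ho hv; have h2 := ent_ge0 ho hw.
  rewrite /test_entropy /outcome_prob in hent.
  have e1 : \sum_i entf (sqmod (dotc (chi i) (V *m psi))) = 0 by lra.
  have e2 : \sum_i entf (sqmod (dotc (chi i) (W *m psi))) = 0 by lra.
  have [i [c [hc ev]]] := det_dist ho hv e1.
  have [j [c' [hc' ew]]] := det_dist ho hw e2.
  rewrite ev ew dotcZl dotcZr ho.
  case: (eqVneq i j) => [hij|hij]; last by rewrite mulr0 mulr0.
  exfalso; apply: hnt; exists (c' * conjc c); split.
    by rewrite sqmodM sqmodJ hc' hc mulr1.
  rewrite ev ew hij scalerA -mulrA [c^*%C * c]mulrC -sqmodE hc mulr1.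
  by [].
- move=> [phi [hphi h0]].
  have hv : dotc (V *m phi) (V *m phi) = 1 by rewrite dotc_unitary.
  have hw : dotc (W *m phi) (W *m phi) = 1 by rewrite dotc_unitary.
  rewrite key in h0.
  have [chi [ho [i0 [i1 [hne [e0 e1]]]]]] := extend2 hd hv hw h0.
  exists phi, chi; split; first by [].
  split.
    move=> [c [hc ew]]; move: h0; rewrite ew dotcZr hv mulr1 => hc0.
    by move: hc; rewrite hc0 sqmod0 => /eqP; rewrite eq_sym oner_eq0.
  rewrite /test_entropy /outcome_prob -e0 -e1 !big1 ?addr0 // => k _;
  by rewrite ho; case: eqP => _; rewrite ?sqmod0 ?sqmod1 ?entf0 ?entf1.
Qed.
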